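(* Let $m\in\mathbb{N}$ and let $V=\sum_{k\in\mathbb{Z}}\widehat V(2k)e^{i2k\pi x}$ be a 1-periodic complex-valued distribution, regarded both as an element of $H_{per}^{-m}$ (with $\widehat V(2k+1)=0$ for all $k$) and of $H_+^{-m}$. Let $S(V)=D^{2m}\dotplus V$ on $L_2(-1,1)$ and $S_{\pm}(V)=D_{\pm}^{2m}\dotplus V$ on $L_2(0,1)$ be the corresponding $m$-sectorial form-sum operators. Then, under the decomposition $L_2(-1,1)=H^0_{per,+}\oplus H^0_{per,-}$ and the identifications $I_\pm:L_2(0,1)=H_\pm^0\to H^0_{per,\pm}$, $$S(V)=S_{+}(V)\oplus S_{-}(V),$$ and consequently $$\mathrm{spec}(S)=\mathrm{spec}(S_{+})\cup\mathrm{spec}(S_{-}),$$ where $\mathrm{spec}$ denotes the discrete spectrum counted with algebraic multiplicities (the union being the union of multisets).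
   Context: For $s\in\mathbb{R}$: $H_{per}^{s}$ is the space of 2-periodic series $f=\sum_{k\in\mathbb{Z}}\widehat f(k)e^{ik\pi x}$ on $[-1,1]$ with $\|f\|^2=\sum_k\langle k\rangle^{2s}|\widehat f(k)|^2<\infty$; $H_{+}^{s}$ is the space of series $f=\sum_{k}\widehat f(2k)e^{i2k\pi x}$ on $[0,1]$ with $\sum_k\langle 2k\rangle^{2s}|\widehat f(2k)|^2<\infty$; $H_{-}^{s}$ is the space of series $f=\sum_{k}\widehat f(2k+1)e^{i(2k+1)\pi x}$ on $[0,1]$ with $\sum_k\langle 2k+1\rangle^{2s}|\widehat f(2k+1)|^2<\infty$; $\langle k\rangle=1+|k|$. $H_{per}^0=L_2(-1,1)$, $H_\pm^0=L_2(0,1)$. $H^s_{per,+}=\{f\in H^s_{per}:\widehat f(2k+1)=0\ \forall k\}$, $H^s_{per,-}=\{f\in H^s_{per}:\widehat f(2k)=0\ \forall k\}$, so $H^s_{per}=H^s_{per,+}\oplus H^s_{per,-}$. $I_\pm:H^s_\pm\to H^s_{per,\pm}$ extends an element on $[0,1]$, given by its Fourier series, to the same series on $[-1,1]$; these are isometric isomorphisms. $D=-i\,d/dx$ on $H^1_{per}$ and $D_\pm=-i\,d/dx$ on $H^1_\pm$; $D^{2m}=|D|^{2m}$, $D_\pm^{2m}=|D_\pm|^{2m}$ act as multiplication by $(n\pi)^{2m}$ on the mode $e^{in\pi x}$. Products $V(x)u$ are formal products of Fourier series: $V(x)u=\sum_n(\sum_j\widehat V(n-j)\widehat u(j))e^{in\pi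 x}$. $S(V)$ is the $m$-sectorial operator on $L_2(-1,1)$ associated with the closed sectorial form $\langle D^{2m}u,v\rangle+\langle Vu,v\rangle$ on $H^m_{per}$ (pairing extending the $L_2(-1,1)$ inner product), with $\mathrm{Dom}(S)=\{u\in H^m_{per}: D^{2m}u+Vu\in L_2(-1,1)\}$, $S(V)u=D^{2m}u+Vu$; $S_\pm(V)$ is the $m$-sectorial operator on $L_2(0,1)$ associated with the form $\langle D_{\pm}^{2m}u,v\rangle_{\pm}+\langle Vu,v\rangle_{\pm}$ on $H_\pm^m$, with $\mathrm{Dom}(S_{\pm})=\{u\in H_{\pm}^{m}\mid D_{\pm}^{2m}u+Vu\in L_{2}(0,1)\}$, $S_\pm(V)u=D_{\pm}^{2m}u+Vu$. The spectra of these operators are discrete; $\mathrm{spec}(A)$ lists the eigenvalues with algebraic multiplicity, ordered lexicographically (by real part, then imaginary part). *)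

(* Defs.v *)
From Stdlib Require Import Reals ZArith.
From Coquelicot Require Import Coquelicot.
Open Scope R_scope.

(** Elements of the spaces H^s_per, H^s_+, H^s_- are represented by their
    Fourier coefficient sequences [f : Z -> C]:
    - H_per : f n is the coefficient of e^{i n pi x}        (frequency n)
    - H_+   : f k is the coefficient of e^{i 2k pi x}       (frequency 2k)
    - H_-   : f k is the coefficient of e^{i (2k+1) pi x}   (frequency 2k+1) *)

Definition fseq := Z -> C.

Definition freq_per (n : Z) : Z := n.
Definition freq_plus (k : Z) : Z := (2 * k)%Z.
Definition freq_minus (k : Z) : Z := (2 * k + 1)%Z.

Definition jb (k : Z) : R := 1 + Rabs (IZR k).

Definition zsummable (a : Z -> R) : Prop :=
  ex_series (fun n : nat => a (Z.of_nat n)) /\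
  ex_series (fun n : nat => a (Z.opp (Z.of_nat (S n)))).

Definition zSeries (f : Z -> C) : C :=
  (Series (fun n : nat => fst (f (Z.of_nat n)))
     + Series (fun n : nat => fst (f (Z.opp (Z.of_nat (S n))))),
   Series (fun n : nat => snd (f (Z.of_nat n)))
     + Series (fun n : nat => snd (f (Z.opp (Z.of_nat (S n)))))).

Definition inH (freq : Z -> Z) (s : Z) (f : fseq) : Prop :=
  zsummable (fun k => powerRZ (jb (freq k)) (2 * s) * (Cmod (f k))^2).

Definition Iplus (a : fseq) : fseq :=
  fun n => if Z.even n then a (Z.div2 n) else RtoC 0.
Definition Iminus (b : fseq) : fseq :=
  fun n => if Z.even n then RtoC 0 else b (Z.div2 n).

(** The potential V = sum_k Vhat(2k) e^{i 2k pi x} is given by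
    [v : Z -> C], v k = Vhat(2k).  As an element of H_per its coefficient
    sequence is [Vper v] (odd coefficients vanish). *)
Definition Vper (v : fseq) : fseq := Iplus v.

Definition mul_per (v u : fseq) : fseq :=
  fun n => zSeries (fun j => Cmult (Vper v (n - j)%Z) (u j)).
(* on [0,1], H_+ : (Vu)^(2n) = sum_j Vhat(2n-2j) uhat(2j);
   on [0,1], H_- : (Vu)^(2n+1) = sum_j Vhat(2n-2j) uhat(2j+1);
   in both cases, in the index k, the coefficient is sum_j v(n-j) u(j). *)
Definition mul_half (v u : fseq) : fseq :=
  fun n => zSeries (fun j => Cmult (v (n - j)%Z) (u j)).

Definition Dpow (freq : Z -> Z) (m : nat) (u : fseq) : fseq :=
  fun k => Cmult (RtoC ((IZR (freq k) * PI) ^ (2 * m))) (u k).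

Definition Sact (freq : Z -> Z) (mul : fseq -> fseq) (m : nat) (u : fseq) : fseq :=
  fun k => Cplus (Dpow freq m u k) (mul u k).
Definition Sdom (freq : Z -> Z) (mul : fseq -> fseq) (m : nat) (u : fseq) : Prop :=
  inH freq (Z.of_nat m) u /\ inH freq 0 (Sact freq mul m u).

Definition S_dom (m : nat) (v : fseq) := Sdom freq_per (mul_per v) m.
Definition S_op  (m : nat) (v : fseq) := Sact freq_per (mul_per v) m.
Definition Sp_dom (m : nat) (v : fseq) := Sdom freq_plus (mul_half v) m.
Definition Sp_op  (m : nat) (v : fseq) := Sact freq_plus (mul_half v) m.
Definition Sm_dom (m : nat) (v : fseq) := Sdom freq_minus (mul_half v) m.
Definition Sm_op  (m : nat) (v : fseq) := Sact freq_minus (mul_half v) m.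

Definition zero_seq : fseq := fun _ => RtoC 0.
Fixpoint gker (Dom : fseq -> Prop) (A : fseq -> fseq) (lam : C) (k : nat)
  (u : fseq) : Prop :=
  match k with
  | O => u = zero_seq
  | S k' => Dom u /\ gker Dom A lam k' (fun j => Cminus (A u j) (Cmult lam (u j)))
  end.
Definition gen_eig (Dom : fseq -> Prop) (A : fseq -> fseq) (lam : C) (u : fseq) :=
  exists k, gker Dom A lam k u.

Fixpoint csum (n : nat) (f : nat -> C) : C :=
  match n with O => RtoC 0 | S n' => Cplus (csum n' f) (f n') end.

Definition lin_indep (n : nat) (w : nat -> fseq) : Prop :=
  forall c : nat -> C,
    (forall k, csum n (fun i => Cmult (c i) (w i k)) = RtoC 0) ->
    forall i, (i < n)%nat -> c i = RtoC 0.

(** [mult_ge Dom A lam n]: the algebraic multiplicity of lam (dimension of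
    its root space, in N U {oo}) is at least n. *)
Definition mult_ge (Dom : fseq -> Prop) (A : fseq -> fseq) (lam : C) (n : nat) :=
  exists w : nat -> fseq,
    (forall i, (i < n)%nat -> gen_eig Dom A lam (w i)) /\ lin_indep n w.

(* Main.v *)
Require Import Defs.
From Stdlib Require Import Reals ZArith Lia Lra Classical FunctionalExtensionality ClassicalEpsilon.
From Coquelicot Require Import Coquelicot.

Lemma div2_ge (n N : nat) : (2 * N <= n)%nat -> (N <= Nat.div2 n)%nat.
Proof. intros H. pose proof (Nat.div2_odd n). destruct (Nat.odd n); simpl in *; lia. Qed.

Lemma LimSup_stutter (s : nat -> R) l :
  is_LimSup_seq s l -> is_LimSup_seq (fun n => s (Nat.div2 n)) l.
Proof.
  destruct l as [l| |]; simpl; intros H.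
  - intros eps. destruct (H eps) as [H1 [N0 H2]]. split.
    + intros N. destruct (H1 N) as [n [Hn Hs]]. exists (2*n)%nat.
      rewrite Nat.div2_double. split; [lia|exact Hs].
    + exists (2*N0)%nat. intros n Hn. apply H2. apply div2_ge; exact Hn.
  - intros M N. destruct (H M N) as [n [Hn Hs]]. exists (2*n)%nat.
    rewrite Nat.div2_double. split; [lia|exact Hs].
  - intros M. destruct (H M) as [N0 H2]. exists (2*N0)%nat. intros n Hn.
    apply H2. apply div2_ge; exact Hn.
Qed.

Lemma LimInf_stutter (s : nat -> R) l :
  is_LimInf_seq s l -> is_LimInf_seq (fun n => s (Nat.div2 n)) l.
Proof.
  destruct l as [l| |]; simpl; intros H.
  - intros eps. destruct (H eps) as [H1 [N0 H2]]. split.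
    + intros N. destruct (H1 N) as [n [Hn Hs]]. exists (2*n)%nat.
      rewrite Nat.div2_double. split; [lia|exact Hs].
    + exists (2*N0)%nat. intros n Hn. apply H2. apply div2_ge; exact Hn.
  - intros M. destruct (H M) as [N0 H2]. exists (2*N0)%nat. intros n Hn.
    apply H2. apply div2_ge; exact Hn.
  - intros M N. destruct (H M N) as [n [Hn Hs]]. exists (2*n)%nat.
    rewrite Nat.div2_double. split; [lia|exact Hs].
Qed.

Lemma Lim_seq_stutter (s : nat -> R) :
  Lim_seq (fun n => s (Nat.div2 n)) = Lim_seq s.
Proof.
  unfold Lim_seq.
  destruct (ex_LimSup_seq s) as [ls Hs]. destruct (ex_LimInf_seq s) as [li Hi].
  rewrite (is_LimSup_seq_unique _ _ Hs), (is_LimInf_seq_unique _ _ Hi).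
  rewrite (is_LimSup_seq_unique _ _ (LimSup_stutter _ _ Hs)).
  rewrite (is_LimInf_seq_unique _ _ (LimInf_stutter _ _ Hi)). reflexivity.
Qed.

Lemma sum_n_even (h g : nat -> R) :
  (forall n, h (2*n)%nat = g n) -> (forall n, h (2*n+1)%nat = 0) ->
  forall n, sum_n h n = sum_n g (Nat.div2 n).
Proof.
  intros He Ho.
  assert (forall k, sum_n h (2*k) = sum_n g k /\ sum_n h (2*k+1) = sum_n g k).
  { induction k.
    - replace (2*0)%nat with 0%nat by lia. replace (0+1)%nat with 1%nat by lia.
      rewrite (sum_Sn h 0), !sum_O. pose proof (He 0%nat) as A0. pose proof (Ho 0%nat) as A1.
      replace (2*0)%nat with 0%nat in A0, A1 by lia. replace (0+1)%nat with 1%nat in A1 by lia.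
      rewrite A0, A1. unfold plus; simpl. split; lra.
    - destruct IHk as [IH1 IH2].
      assert (E1 : sum_n h (2 * S k) = sum_n g (S k)).
      { replace (2 * S k)%nat with (S (2*k+1)) by lia.
        rewrite sum_Sn, IH2, sum_Sn. replace (S (2*k+1)) with (2 * S k)%nat by lia.
        rewrite He. reflexivity. }
      split; [exact E1|].
      replace (2 * S k + 1)%nat with (S (2 * S k)) by lia.
      rewrite sum_Sn, E1. replace (S (2 * S k)) with (2 * S k + 1)%nat by lia.
      rewrite Ho. unfold plus; simpl. lra. }
  intros n. pose proof (Nat.div2_odd n). destruct (Nat.odd n); simpl in H0.
  - rewrite H0 at 1. replace (2 * Nat.div2 n + 1)%nat with (2 * Nat.div2 n + 1)%nat by lia.
    apply H.
  - rewrite H0 at 1. rewrite Nat.add_0_r. apply H.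
Qed.

Lemma Series_even (h g : nat -> R) :
  (forall n, h (2*n)%nat = g n) -> (forall n, h (2*n+1)%nat = 0) ->
  Series h = Series g.
Proof.
  intros He Ho. unfold Series.
  rewrite (Lim_seq_ext _ _ (sum_n_even h g He Ho)).
  rewrite (Lim_seq_stutter (sum_n g)). reflexivity.
Qed.

Lemma Series_odd (h g : nat -> R) :
  (forall n, h (2*n)%nat = 0) -> (forall n, h (2*n+1)%nat = g n) ->
  Series h = Series g.
Proof.
  intros He Ho. unfold Series.
  rewrite <- (Lim_seq_incr_1 (sum_n h)).
  assert (E : forall n, sum_n h (S n) = sum_n (fun k => h (S k)) n).
  { intros n. induction n. rewrite (sum_Sn h 0), !sum_O. pose proof (He 0%nat) as H0. simpl in H0. rewrite H0. unfold plus; simpl. lra.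
    rewrite sum_Sn, IHn, sum_Sn. reflexivity. }
  rewrite (Lim_seq_ext _ _ E).
  change (Series (fun k => h (S k)) = Series g).
  apply Series_even.
  - intros n. replace (S (2*n)) with (2*n+1)%nat by lia. apply Ho.
  - intros n. replace (S (2*n+1)) with (2*(S n))%nat by lia. apply He.
Qed.

Lemma sum_n_incr (h : nat -> R) : (forall n, 0 <= h n) ->
  forall n, sum_n h n <= sum_n h (S n).
Proof. intros Hp n. rewrite (sum_Sn h n). unfold plus; simpl. specialize (Hp (S n)). lra. Qed.

Lemma sum_n_mono (h : nat -> R) : (forall n, 0 <= h n) ->
  forall n m, (n <= m)%nat -> sum_n h n <= sum_n h m.
Proof.
  intros Hp n m Hnm. induction Hnm. lra.
  eapply Rle_trans. exact IHHnm. apply sum_n_incr; auto.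
Qed.

Lemma sum_n_nonneg (h : nat -> R) : (forall n, 0 <= h n) -> forall n, 0 <= sum_n h n.
Proof.
  intros Hp n. induction n. rewrite sum_O. auto.
  rewrite (sum_Sn h n). unfold plus; simpl. specialize (Hp (S n)). lra.
Qed.

Lemma ex_series_iff (a : nat -> R) : ex_series a <-> ex_finite_lim_seq (sum_n a).
Proof. split; intros [l H]; exists l; exact H. Qed.

Lemma ex_series_bound (a : nat -> R) : (forall n, 0 <= a n) ->
  (ex_series a <-> exists M, forall n, sum_n a n <= M).
Proof.
  intros Hp. rewrite ex_series_iff. split.
  - intros [l Hl]. exists l. intros n. apply is_lim_seq_incr_compare; auto.
    apply sum_n_incr; auto.
  - intros [M HM]. apply ex_finite_lim_seq_incr with M; auto. apply sum_n_incr; auto.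
Qed.

Lemma sum_n_inter (h f g : nat -> R) :
  (forall n, h (2*n)%nat = f n) -> (forall n, h (2*n+1)%nat = g n) ->
  forall k, sum_n h (2*k+1) = sum_n f k + sum_n g k.
Proof.
  intros He Ho k. induction k.
  - replace (2*0+1)%nat with 1%nat by lia. rewrite (sum_Sn h 0), !sum_O.
    pose proof (He 0%nat) as A0. pose proof (Ho 0%nat) as A1.
    replace (2*0)%nat with 0%nat in A0, A1 by lia. replace (0+1)%nat with 1%nat in A1 by lia.
    rewrite A0, A1. reflexivity.
  - replace (2 * S k + 1)%nat with (S (S (2*k+1))) by lia.
    rewrite (sum_Sn h (S (2*k+1))), (sum_Sn h (2*k+1)), IHk, (sum_Sn f k), (sum_Sn g k).
    replace (S (2*k+1)) with (2 * S k)%nat by lia.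
    replace (S (2 * S k)) with (2 * S k + 1)%nat by lia.
    rewrite He, Ho. unfold plus; simpl. lra.
Qed.

Lemma ex_series_inter (h f g : nat -> R) :
  (forall n, 0 <= f n) -> (forall n, 0 <= g n) ->
  (forall n, h (2*n)%nat = f n) -> (forall n, h (2*n+1)%nat = g n) ->
  (ex_series h <-> ex_series f /\ ex_series g).
Proof.
  intros Hf Hg He Ho.
  assert (Hh : forall n, 0 <= h n).
  { intros n. destruct (Nat.Even_or_Odd n) as [[k ->]|[k ->]].
    - rewrite He. auto.
    - rewrite Ho. auto. }
  rewrite !ex_series_bound; auto. split.
  - intros [M HM]. split; exists M; intros n; rewrite <- (HM (2*n+1)%nat);
    rewrite (sum_n_inter h f g He Ho);
    pose proof (sum_n_nonneg f Hf n); pose proof (sum_n_nonneg g Hg n); lra.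
  - intros [[M1 H1] [M2 H2]]. exists (M1 + M2). intros n.
    eapply Rle_trans. apply (sum_n_mono h Hh n (2*n+1)). lia.
    rewrite (sum_n_inter h f g He Ho). specialize (H1 n); specialize (H2 n); lra.
Qed.

Definition combo (a b : fseq) : fseq := fun n => Cplus (Iplus a n) (Iminus b n).

Lemma div2_e z : Z.div2 (2*z) = z.
Proof. pose proof (Z.div2_odd (2*z)). rewrite Z.odd_even in H. cbn [Z.b2z] in H. lia. Qed.
Lemma div2_o z : Z.div2 (2*z+1) = z.
Proof. pose proof (Z.div2_odd (2*z+1)). rewrite Z.odd_odd in H. cbn [Z.b2z] in H. lia. Qed.

Lemma Iplus_e a z : Iplus a (2*z)%Z = a z.
Proof. unfold Iplus. rewrite Z.even_even, div2_e. reflexivity. Qed.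
Lemma Iplus_o a z : Iplus a (2*z+1)%Z = RtoC 0.
Proof. unfold Iplus. rewrite Z.even_odd. reflexivity. Qed.
Lemma Iminus_e b z : Iminus b (2*z)%Z = RtoC 0.
Proof. unfold Iminus. rewrite Z.even_even. reflexivity. Qed.
Lemma Iminus_o b z : Iminus b (2*z+1)%Z = b z.
Proof. unfold Iminus. rewrite Z.even_odd, div2_o. reflexivity. Qed.
Lemma combo_e a b z : combo a b (2*z)%Z = a z.
Proof. unfold combo. rewrite Iplus_e, Iminus_e. apply Cplus_0_r. Qed.
Lemma combo_o a b z : combo a b (2*z+1)%Z = b z.
Proof. unfold combo. rewrite Iplus_o, Iminus_o. apply Cplus_0_l. Qed.

Lemma Z_cases (n : Z) : exists z, n = (2*z)%Z \/ n = (2*z+1)%Z.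
Proof. exists (Z.div2 n). pose proof (Z.div2_odd n). destruct (Z.odd n); cbn [Z.b2z] in H; lia. Qed.

Lemma zSeries_P1 (F G : Z -> C) :
  (forall z, F (2*z)%Z = G z) -> (forall z, F (2*z+1)%Z = RtoC 0) -> zSeries F = zSeries G.
Proof.
  intros He Ho. unfold zSeries. f_equal; f_equal.
  - apply Series_even; intros n.
    + replace (Z.of_nat (2*n)) with (2 * Z.of_nat n)%Z by lia. rewrite He. reflexivity.
    + replace (Z.of_nat (2*n+1)) with (2 * Z.of_nat n + 1)%Z by lia. rewrite Ho. reflexivity.
  - apply Series_odd; intros n.
    + replace (- Z.of_nat (S (2*n)))%Z with (2 * (- Z.of_nat (S n)) + 1)%Z by lia. rewrite Ho. reflexivity.
    + replace (- Z.of_nat (S (2*n+1)))%Z with (2 * (- Z.of_nat (S n)))%Z by lia. rewrite He. reflexivity.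
  - apply Series_even; intros n.
    + replace (Z.of_nat (2*n)) with (2 * Z.of_nat n)%Z by lia. rewrite He. reflexivity.
    + replace (Z.of_nat (2*n+1)) with (2 * Z.of_nat n + 1)%Z by lia. rewrite Ho. reflexivity.
  - apply Series_odd; intros n.
    + replace (- Z.of_nat (S (2*n)))%Z with (2 * (- Z.of_nat (S n)) + 1)%Z by lia. rewrite Ho. reflexivity.
    + replace (- Z.of_nat (S (2*n+1)))%Z with (2 * (- Z.of_nat (S n)))%Z by lia. rewrite He. reflexivity.
Qed.

Lemma zSeries_P2 (F G : Z -> C) :
  (forall z, F (2*z)%Z = RtoC 0) -> (forall z, F (2*z+1)%Z = G z) -> zSeries F = zSeries G.
Proof.
  intros He Ho. unfold zSeries. f_equal; f_equal.
  - apply Series_odd; intros n.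
    + replace (Z.of_nat (2*n)) with (2 * Z.of_nat n)%Z by lia. rewrite He. reflexivity.
    + replace (Z.of_nat (2*n+1)) with (2 * Z.of_nat n + 1)%Z by lia. rewrite Ho. reflexivity.
  - apply Series_even; intros n.
    + replace (- Z.of_nat (S (2*n)))%Z with (2 * (- Z.of_nat (S n)) + 1)%Z by lia. rewrite Ho. reflexivity.
    + replace (- Z.of_nat (S (2*n+1)))%Z with (2 * (- Z.of_nat (S n)))%Z by lia. rewrite He. reflexivity.
  - apply Series_odd; intros n.
    + replace (Z.of_nat (2*n)) with (2 * Z.of_nat n)%Z by lia. rewrite He. reflexivity.
    + replace (Z.of_nat (2*n+1)) with (2 * Z.of_nat n + 1)%Z by lia. rewrite Ho. reflexivity.
  - apply Series_even; intros n.
    + replace (- Z.of_nat (S (2*n)))%Z with (2 * (- Z.of_nat (S n)) + 1)%Z by lia. rewrite Ho. reflexivity.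
    + replace (- Z.of_nat (S (2*n+1)))%Z with (2 * (- Z.of_nat (S n)))%Z by lia. rewrite He. reflexivity.
Qed.

Lemma mul_per_e v a b k : mul_per v (combo a b) (2*k)%Z = mul_half v a k.
Proof.
  unfold mul_per, mul_half, Vper. apply zSeries_P1; intros z.
  - replace (2*k - 2*z)%Z with (2*(k-z))%Z by lia. rewrite Iplus_e, combo_e. reflexivity.
  - replace (2*k - (2*z+1))%Z with (2*(k-z-1)+1)%Z by lia. rewrite Iplus_o. apply Cmult_0_l.
Qed.

Lemma mul_per_o v a b k : mul_per v (combo a b) (2*k+1)%Z = mul_half v b k.
Proof.
  unfold mul_per, mul_half, Vper. apply zSeries_P2; intros z.
  - replace (2*k+1 - 2*z)%Z with (2*(k-z)+1)%Z by lia. rewrite Iplus_o. apply Cmult_0_l.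
  - replace (2*k+1 - (2*z+1))%Z with (2*(k-z))%Z by lia. rewrite Iplus_e, combo_o. reflexivity.
Qed.

Lemma Sop_split m v a b :
  S_op m v (combo a b) = combo (Sp_op m v a) (Sm_op m v b).
Proof.
  apply functional_extensionality. intros n. destruct (Z_cases n) as [z [-> | ->]].
  - rewrite combo_e. unfold S_op, Sp_op, Sact. rewrite mul_per_e. f_equal.
    unfold Dpow. rewrite combo_e. reflexivity.
  - rewrite combo_o. unfold S_op, Sm_op, Sact. rewrite mul_per_o. f_equal.
    unfold Dpow. rewrite combo_o. reflexivity.
Qed.

Lemma weight_nonneg (x : Z) s (c : C) : 0 <= powerRZ (jb x) s * (Cmod c)^2.
Proof.
  apply Rmult_le_pos. apply powerRZ_le. unfold jb. pose proof (Rabs_pos (IZR x)). lra.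
  apply pow2_ge_0.
Qed.

Lemma inH_split s a b :
  inH freq_per s (combo a b) <-> inH freq_plus s a /\ inH freq_minus s b.
Proof.
  unfold inH, zsummable.
  rewrite (ex_series_inter (fun n => powerRZ (jb (freq_per (Z.of_nat n))) (2 * s) * Cmod (combo a b (Z.of_nat n)) ^ 2)
     (fun n => powerRZ (jb (freq_plus (Z.of_nat n))) (2 * s) * Cmod (a (Z.of_nat n)) ^ 2)
     (fun n => powerRZ (jb (freq_minus (Z.of_nat n))) (2 * s) * Cmod (b (Z.of_nat n)) ^ 2)).
  rewrite (ex_series_inter (fun n => powerRZ (jb (freq_per (- Z.of_nat (S n))%Z)) (2 * s) * Cmod (combo a b (- Z.of_nat (S n))%Z) ^ 2)
     (fun n => powerRZ (jb (freq_minus (- Z.of_nat (S n))%Z)) (2 * s) * Cmod (b (- Z.of_nat (S n))%Z) ^ 2)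
     (fun n => powerRZ (jb (freq_plus (- Z.of_nat (S n))%Z)) (2 * s) * Cmod (a (- Z.of_nat (S n))%Z) ^ 2)).
  - tauto.
  - intros; apply weight_nonneg.
  - intros; apply weight_nonneg.
  - intros n. replace (- Z.of_nat (S (2*n)))%Z with (2 * (- Z.of_nat (S n)) + 1)%Z by lia.
    unfold freq_per. rewrite combo_o. reflexivity.
  - intros n. replace (- Z.of_nat (S (2*n+1)))%Z with (2 * (- Z.of_nat (S n)))%Z by lia.
    unfold freq_per. rewrite combo_e. reflexivity.
  - intros; apply weight_nonneg.
  - intros; apply weight_nonneg.
  - intros n. replace (Z.of_nat (2*n)) with (2 * Z.of_nat n)%Z by lia.
    unfold freq_per. rewrite combo_e. reflexivity.
  - intros n. replace (Z.of_nat (2*n+1)) with (2 * Z.of_nat n + 1)%Z by lia.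
    unfold freq_per. rewrite combo_o. reflexivity.
Qed.

Lemma Sdom_split m v a b :
  S_dom m v (combo a b) <-> Sp_dom m v a /\ Sm_dom m v b.
Proof.
  unfold S_dom, Sp_dom, Sm_dom, Sdom. fold (S_op m v (combo a b)).
  fold (Sp_op m v a). fold (Sm_op m v b). rewrite Sop_split, !inH_split. tauto.
Qed.

Lemma csum_ext_lt n (f g : nat -> C) : (forall i, (i<n)%nat -> f i = g i) -> csum n f = csum n g.
Proof. induction n; intros H; simpl. reflexivity. rewrite IHn, H; auto. Qed.

Lemma csum_zero n (f : nat -> C) : (forall i, (i<n)%nat -> f i = RtoC 0) -> csum n f = RtoC 0.
Proof. induction n; intros H; simpl. reflexivity. rewrite IHn, H; auto. apply Cplus_0_l. Qed.

Lemma csum_plus n (f g : nat -> C) : csum n (fun i => Cplus (f i) (g i)) = Cplus (csum n f) (csum n g).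
Proof. induction n; simpl. ring. rewrite IHn. ring. Qed.

Lemma csum_scal n c (f : nat -> C) : csum n (fun i => Cmult c (f i)) = Cmult c (csum n f).
Proof. induction n; simpl. ring. rewrite IHn. ring. Qed.

Lemma csum_split n1 n2 (f : nat -> C) : csum (n1+n2) f = Cplus (csum n1 f) (csum n2 (fun i => f (n1+i)%nat)).
Proof. induction n2; simpl. rewrite Nat.add_0_r. ring. rewrite Nat.add_succ_r. simpl. rewrite IHn2. ring. Qed.

Lemma csum_swap n r (f : nat -> nat -> C) :
  csum n (fun i => csum r (fun j => f i j)) = csum r (fun j => csum n (fun i => f i j)).
Proof.
  induction n; simpl. symmetry. apply csum_zero. auto.
  rewrite IHn. rewrite <- csum_plus. reflexivity.
Qed.

Lemma C1_neq_0 : RtoC 1 <> RtoC 0.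
Proof. intros H. injection H. lra. Qed.

Lemma ker_lemma (r : nat) : forall n (M : nat -> nat -> C), (r < n)%nat ->
  exists d : nat -> C, (exists i, (i<n)%nat /\ d i <> RtoC 0) /\
    forall j, (j<r)%nat -> csum n (fun i => Cmult (d i) (M i j)) = RtoC 0.
Proof.
  induction r; intros n M Hn.
  - exists (fun _ => RtoC 1). split. exists 0%nat. split. lia. apply C1_neq_0. intros; lia.
  - destruct n as [|n']. lia.
    destruct (classic (exists q, (q < S r)%nat /\ M n' q <> RtoC 0)) as [[q [Hq Hp]]|Hno].
    + set (p := M n' q).
      set (sk := fun j => if (j <? q)%nat then j else S j).
      set (M'' := fun i j => Cminus (M i j) (Cmult (Cdiv (M i q) p) (M n' j))).
      destruct (IHr n' (fun i j => M'' i (sk j))) as [d' [[i0 [Hi0 Hd0]] Hd']]. lia.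
      set (Sq := csum n' (fun i => Cmult (d' i) (M i q))).
      exists (fun i => if (i <? n')%nat then d' i else Copp (Cdiv Sq p)). split.
      * exists i0. split. lia. replace (i0 <? n')%nat with true. auto. symmetry. apply Nat.ltb_lt; auto.
      * intros j Hj. simpl. rewrite Nat.ltb_irrefl.
        rewrite (csum_ext_lt n' _ (fun i => Cplus (Cmult (d' i) (M'' i j)) (Cmult (Cdiv (M n' j) p) (Cmult (d' i) (M i q))))).
        2:{ intros i Hi. replace (i <? n')%nat with true by (symmetry; apply Nat.ltb_lt; auto).
            unfold M''. field. exact Hp. }
        rewrite csum_plus, csum_scal. fold Sq.
        assert (E : csum n' (fun i => Cmult (d' i) (M'' i j)) = RtoC 0).
        { destruct (Nat.eq_dec j q) as [->|Hjq].
          - apply csum_zero. intros i _. unfold M''. fold p. field. exact Hp.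
          - destruct (Nat.lt_ge_cases j q) as [Hlt|Hge].
            + pose proof (Hd' j ltac:(lia)) as HH. unfold sk in HH.
              replace (j <? q)%nat with true in HH by (symmetry; apply Nat.ltb_lt; auto). exact HH.
            + pose proof (Hd' (j-1)%nat ltac:(lia)) as HH. unfold sk in HH.
              replace (j - 1 <? q)%nat with false in HH by (symmetry; apply Nat.ltb_ge; lia).
              replace (S (j-1)) with j in HH by lia. exact HH. }
        rewrite E. field. exact Hp.
    + exists (fun i => if (i =? n')%nat then RtoC 1 else RtoC 0). split.
      * exists n'. split. lia. rewrite Nat.eqb_refl. apply C1_neq_0.
      * intros j Hj. simpl. rewrite Nat.eqb_refl. rewrite csum_zero.
        -- assert (M n' j = RtoC 0). { apply NNPP. intros Hc. apply Hno. exists j. auto. }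
           rewrite H. ring.
        -- intros i Hi. replace (i =? n')%nat with false by (symmetry; apply Nat.eqb_neq; lia). ring.
Qed.

Definition lc (r : nat) (c : nat -> C) (y : nat -> fseq) : fseq :=
  fun k => csum r (fun j => Cmult (c j) (y j k)).
Definition in_span r (y : nat -> fseq) (x : fseq) := exists c, x = lc r c y.

Lemma fin_choice {A : Type} (a0 : A) n (P : nat -> A -> Prop) :
  (forall i, (i<n)%nat -> exists c, P i c) -> exists f : nat -> A, forall i, (i<n)%nat -> P i (f i).
Proof.
  intros H.
  assert (H' : forall i, exists c, (i<n)%nat -> P i c).
  { intros i. destruct (Nat.lt_ge_cases i n) as [Hi|Hi].
    - destruct (H i Hi) as [c Hc]. exists c. auto.
    - exists a0. intros; lia. }
  exists (fun i => proj1_sig (constructive_indefinite_description _ (H' i))).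
  intros i Hi. destruct (constructive_indefinite_description _ (H' i)) as [c Hc]. simpl. auto.
Qed.

Lemma steinitz r n (x y : nat -> fseq) : (r < n)%nat ->
  (forall i, (i<n)%nat -> in_span r y (x i)) -> ~ lin_indep n x.
Proof.
  intros Hrn Hs Hli.
  destruct (fin_choice (fun _ => RtoC 0) n (fun i c => x i = lc r c y) Hs) as [Cf HC].
  destruct (ker_lemma r n (fun i j => Cf i j) Hrn) as [d [[i0 [Hi0 Hd0]] Hd]].
  apply Hd0. apply (Hli d); auto. intros k.
  rewrite (csum_ext_lt n _ (fun i => csum r (fun j => Cmult (Cmult (d i) (Cf i j)) (y j k)))).
  - rewrite csum_swap. apply csum_zero. intros j Hj.
    rewrite (csum_ext_lt n _ (fun i => Cmult (y j k) (Cmult (d i) (Cf i j)))).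
    + rewrite csum_scal, Hd; auto. ring.
    + intros; ring.
  - intros i Hi. rewrite (HC i Hi). unfold lc. rewrite <- csum_scal.
    apply csum_ext_lt. intros; ring.
Qed.

Lemma extract (P : fseq -> Prop) (a : nat -> fseq) n :
  (forall i, (i<n)%nat -> P (a i)) ->
  exists r alpha, (forall j, (j<r)%nat -> P (alpha j)) /\ lin_indep r alpha /\
    (forall i, (i<n)%nat -> in_span r alpha (a i)).
Proof.
  induction n; intros HP.
  - exists 0%nat, (fun _ => zero_seq). split. intros; lia. split.
    intros c _ i Hi; lia. intros; lia.
  - destruct IHn as [r [alpha [H1 [H2 H3]]]]. intros; apply HP; lia.
    destruct (classic (in_span r alpha (a n))) as [Hin|Hout].
    + exists r, alpha. split; auto. split; auto. intros i Hi.
      destruct (Nat.eq_dec i n) as [->|]. auto. apply H3; lia.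
    + set (alpha' := fun j => if (j =? r)%nat then a n else alpha j).
      assert (Ea : forall j, (j<r)%nat -> alpha' j = alpha j).
      { intros j Hj. unfold alpha'. replace (j =? r)%nat with false by (symmetry; apply Nat.eqb_neq; lia). auto. }
      assert (Er : alpha' r = a n). { unfold alpha'. rewrite Nat.eqb_refl. auto. }
      exists (S r), alpha'. split; [|split].
      * intros j Hj. destruct (Nat.eq_dec j r) as [->|]. rewrite Er. apply HP; lia.
        rewrite Ea by lia. apply H1; lia.
      * intros c Hc.
        assert (Hk : forall k, Cplus (csum r (fun i => Cmult (c i) (alpha i k))) (Cmult (c r) (a n k)) = RtoC 0).
        { intros k. rewrite <- (Hc k). simpl. rewrite Er. f_equal. apply csum_ext_lt.
          intros i Hi. rewrite Ea; auto. }
        assert (Hcr : c r = RtoC 0).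
        { apply NNPP. intros Hne. apply Hout.
          exists (fun i => Copp (Cdiv (c i) (c r))). apply functional_extensionality. intros k.
          unfold lc. specialize (Hk k).
          rewrite (csum_ext_lt r _ (fun i => Cmult (Copp (Cdiv (RtoC 1) (c r))) (Cmult (c i) (alpha i k)))).
          rewrite csum_scal.
          replace (csum r (fun i => Cmult (c i) (alpha i k))) with (Copp (Cmult (c r) (a n k))).
          field. exact Hne.
          rewrite <- (Cplus_0_l (Copp _)). rewrite <- Hk. ring.
          intros; field; exact Hne. }
        intros i Hi. destruct (Nat.eq_dec i r) as [->|]. exact Hcr.
        apply (H2 c); [|lia]. intros k. specialize (Hk k). rewrite Hcr in Hk.
        rewrite <- Hk. ring.
      * intros i Hi. destruct (Nat.eq_dec i n) as [->|].
        -- exists (fun j => if (j =? r)%nat then RtoC 1 else RtoC 0).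
           apply functional_extensionality. intros k. unfold lc. simpl.
           rewrite Nat.eqb_refl, Er, csum_zero. ring.
           intros j Hj. replace (j =? r)%nat with false by (symmetry; apply Nat.eqb_neq; lia). ring.
        -- destruct (H3 i ltac:(lia)) as [c ->].
           exists (fun j => if (j =? r)%nat then RtoC 0 else c j).
           apply functional_extensionality. intros k. unfold lc. simpl.
           rewrite Nat.eqb_refl. rewrite Cmult_0_l, Cplus_0_r. apply csum_ext_lt.
           intros j Hj. replace (j =? r)%nat with false by (symmetry; apply Nat.eqb_neq; lia).
           rewrite Ea; auto.
Qed.

Lemma lin_indep_le r n (alpha : nat -> fseq) : (n <= r)%nat -> lin_indep r alpha -> lin_indep n alpha.
Proof.
  intros Hnr Hli c Hc i Hi.
  set (c' := fun j => if (j <? n)%nat then c j else RtoC 0).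
  assert (c' i = RtoC 0).
  { apply (Hli c'); [|lia]. intros k. replace r with (n + (r - n))%nat by lia.
    rewrite csum_split. rewrite (csum_zero (r - n) (fun j => Cmult (c' (n + j)%nat) (alpha (n+j)%nat k))).
    - rewrite Cplus_0_r, <- (Hc k). apply csum_ext_lt. intros j Hj. unfold c'.
      replace (j <? n)%nat with true by (symmetry; apply Nat.ltb_lt; auto). auto.
    - intros j _. unfold c'. replace (n + j <? n)%nat with false by (symmetry; apply Nat.ltb_ge; lia). ring. }
  unfold c' in H. replace (i <? n)%nat with true in H by (symmetry; apply Nat.ltb_lt; auto). auto.
Qed.

Lemma sum_n_zero (a : nat -> R) : (forall n, a n = 0) -> forall n, sum_n a n = 0.
Proof. intros H n. induction n. rewrite sum_O; auto. rewrite sum_Sn, IHn, H. unfold plus; simpl; lra. Qed.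

Lemma Series_zero (a : nat -> R) : (forall n, a n = 0) -> Series a = 0.
Proof.
  intros H. unfold Series. rewrite (Lim_seq_ext _ (fun _ => 0)). rewrite Lim_seq_const. reflexivity.
  apply sum_n_zero; auto.
Qed.

Lemma ex_series_zero (a : nat -> R) : (forall n, a n = 0) -> ex_series a.
Proof.
  intros H. apply ex_series_iff. exists 0. apply (is_lim_seq_ext (fun _ => 0)).
  intros n; symmetry; apply sum_n_zero; auto. apply is_lim_seq_const.
Qed.

Lemma inH_zero freq s : inH freq s zero_seq.
Proof.
  unfold inH, zsummable, zero_seq. split; apply ex_series_zero; intros n; rewrite Cmod_0; ring.
Qed.

Lemma Sact_half_zero freq v m : Sact freq (mul_half v) m zero_seq = zero_seq.
Proof.
  apply functional_extensionality. intros k. unfold Sact, Dpow, mul_half, zero_seq, zSeries.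
  rewrite Cmult_0_r. simpl.
  rewrite !Series_zero; try (intros; simpl; ring).
  apply injective_projections; simpl; ring.
Qed.

Lemma Sdom_half_zero freq v m : Sdom freq (mul_half v) m zero_seq.
Proof. split. apply inH_zero. rewrite Sact_half_zero. apply inH_zero. Qed.

Lemma gker_half_zero freq v m lam k :
  gker (Sdom freq (mul_half v) m) (Sact freq (mul_half v) m) lam k zero_seq.
Proof.
  induction k; simpl. reflexivity. split. apply Sdom_half_zero.
  rewrite Sact_half_zero.
  replace (fun j => Cminus (zero_seq j) (Cmult lam (zero_seq j))) with zero_seq. auto.
  apply functional_extensionality; intros; unfold zero_seq; ring.
Qed.

Lemma decomp (w : fseq) : w = combo (fun z => w (2*z)%Z) (fun z => w (2*z+1)%Z).
Proof.
  apply functional_extensionality. intros n. destruct (Z_cases n) as [z [-> | ->]].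
  rewrite combo_e; auto. rewrite combo_o; auto.
Qed.

Lemma combo_eq a b a' b' : combo a b = combo a' b' -> a = a' /\ b = b'.
Proof.
  intros H. split; apply functional_extensionality; intros z.
  rewrite <- (combo_e a b z), H, combo_e; auto.
  rewrite <- (combo_o a b z), H, combo_o; auto.
Qed.

Lemma combo_zero : combo zero_seq zero_seq = zero_seq.
Proof.
  apply functional_extensionality. intros n. destruct (Z_cases n) as [z [-> | ->]].
  rewrite combo_e; auto. rewrite combo_o; auto.
Qed.

Lemma gker_split m v lam k : forall a b,
  gker (S_dom m v) (S_op m v) lam k (combo a b) <->
  gker (Sp_dom m v) (Sp_op m v) lam k a /\ gker (Sm_dom m v) (Sm_op m v) lam k b.
Proof.
  induction k; intros a b; simpl.
  - split.
    + intros H. rewrite <- combo_zero in H. apply combo_eq in H. exact H.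
    + intros [-> ->]. apply combo_zero.
  - rewrite Sdom_split.
    replace (fun j => Cminus (S_op m v (combo a b) j) (Cmult lam (combo a b j)))
      with (combo (fun j => Cminus (Sp_op m v a j) (Cmult lam (a j)))
                  (fun j => Cminus (Sm_op m v b j) (Cmult lam (b j)))).
    + rewrite IHk. tauto.
    + apply functional_extensionality. intros n. rewrite Sop_split.
      destruct (Z_cases n) as [z [-> | ->]].
      rewrite !combo_e; auto. rewrite !combo_o; auto.
Qed.

Lemma ltb_t i n : (i < n)%nat -> (i <? n)%nat = true.
Proof. intros; apply Nat.ltb_lt; auto. Qed.
Lemma ltb_f i n : (n <= i)%nat -> (i <? n)%nat = false.
Proof. intros; apply Nat.ltb_ge; auto. Qed.

Theorem theorem6 (m : nat) (hm : (1 <= m)%nat) (v : fseq)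
  (hVper : inH freq_per (- Z.of_nat m) (Vper v))
  (hVplus : inH freq_plus (- Z.of_nat m) v) :
  (* S(V) = S_+(V) (+) S_-(V) under I_+ (+) I_- *)
  (forall a b : fseq,
     S_dom m v (fun n => Cplus (Iplus a n) (Iminus b n))
     <-> Sp_dom m v a /\ Sm_dom m v b) /\
  (forall a b : fseq, Sp_dom m v a -> Sm_dom m v b ->
     S_op m v (fun n => Cplus (Iplus a n) (Iminus b n))
     = (fun n => Cplus (Iplus (Sp_op m v a) n) (Iminus (Sm_op m v b) n))) /\
  (* spec(S) = spec(S_+) U spec(S_-) as multisets (algebraic multiplicities) *)
  (forall (lam : C) (n : nat),
     mult_ge (S_dom m v) (S_op m v) lam n
     <-> exists n1 n2, n = (n1 + n2)%nat /\
           mult_ge (Sp_dom m v) (Sp_op m v) lam n1 /\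
           mult_ge (Sm_dom m v) (Sm_op m v) lam n2).
Proof.
  split; [|split].
  - intros a b. exact (Sdom_split m v a b).
  - intros a b _ _. exact (Sop_split m v a b).
  - intros lam n. split.
    + intros [w [Hw Hli]].
      set (a := fun i => fun z => w i (2*z)%Z).
      set (b := fun i => fun z => w i (2*z+1)%Z).
      assert (Hab : forall i, (i<n)%nat ->
        gen_eig (Sp_dom m v) (Sp_op m v) lam (a i) /\ gen_eig (Sm_dom m v) (Sm_op m v) lam (b i)).
      { intros i Hi. destruct (Hw i Hi) as [k Hk]. rewrite (decomp (w i)) in Hk.
        apply gker_split in Hk. destruct Hk. split; exists k; auto. }
      destruct (extract (gen_eig (Sp_dom m v) (Sp_op m v) lam) a n) as [r1 [alpha [HA1 [HA2 HA3]]]].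
      { intros i Hi; apply Hab; auto. }
      destruct (extract (gen_eig (Sm_dom m v) (Sm_op m v) lam) b n) as [r2 [beta [HB1 [HB2 HB3]]]].
      { intros i Hi; apply Hab; auto. }
      assert (Hle : (n <= r1 + r2)%nat).
      { destruct (Nat.le_gt_cases n (r1+r2)) as [H|H]; auto. exfalso.
        set (y := fun j => if (j <? r1)%nat then combo (alpha j) zero_seq else combo zero_seq (beta (j - r1)%nat)).
        apply (steinitz (r1+r2) n w y H); auto.
        intros i Hi. destruct (HA3 i Hi) as [ca Ea]. destruct (HB3 i Hi) as [cb Eb].
        exists (fun j => if (j <? r1)%nat then ca j else cb (j - r1)%nat).
        rewrite (decomp (w i)). apply functional_extensionality. intros k. unfold lc.
        rewrite csum_split. destruct (Z_cases k) as [z [-> | ->]].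
        - rewrite combo_e. change (w i (2*z)%Z) with (a i z). rewrite Ea. unfold lc.
          rewrite (csum_zero r2).
          + rewrite Cplus_0_r. apply csum_ext_lt. intros j Hj. unfold y. rewrite !ltb_t by auto.
            rewrite combo_e. reflexivity.
          + intros j _. unfold y. rewrite !ltb_f by lia. rewrite combo_e. unfold zero_seq. ring.
        - rewrite combo_o. change (w i (2*z+1)%Z) with (b i z). rewrite Eb. unfold lc.
          rewrite (csum_zero r1).
          + rewrite Cplus_0_l. apply csum_ext_lt. intros j Hj. unfold y. rewrite !ltb_f by lia.
            replace (r1 + j - r1)%nat with j by lia. rewrite combo_o. reflexivity.
          + intros j Hj. unfold y. rewrite !ltb_t by auto. rewrite combo_o. unfold zero_seq. ring. }
      exists (Nat.min n r1), (n - Nat.min n r1)%nat. split. lia. split.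
      * exists alpha. split. intros i Hi; apply HA1; lia. apply (lin_indep_le r1); auto. lia.
      * exists beta. split. intros i Hi; apply HB1; lia. apply (lin_indep_le r2); auto. lia.
    + intros [n1 [n2 [-> [[wa [Ha Hai]] [wb [Hb Hbi]]]]]].
      exists (fun i => if (i <? n1)%nat then combo (wa i) zero_seq else combo zero_seq (wb (i - n1)%nat)).
      split.
      * intros i Hi. destruct (Nat.lt_ge_cases i n1) as [H1|H1].
        -- rewrite ltb_t by auto. destruct (Ha i H1) as [k Hk]. exists k.
           apply gker_split. split; auto. exact (gker_half_zero freq_minus v m lam k).
        -- rewrite ltb_f by auto. destruct (Hb (i - n1)%nat ltac:(lia)) as [k Hk]. exists k.
           apply gker_split. split; auto. exact (gker_half_zero freq_plus v m lam k).
      * intros c Hc.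
        assert (E1 : forall i, (i < n1)%nat -> c i = RtoC 0).
        { apply (Hai c). intros z. specialize (Hc (2*z)%Z). rewrite csum_split in Hc.
          rewrite (csum_zero n2) in Hc.
          - rewrite Cplus_0_r in Hc. rewrite <- Hc. apply csum_ext_lt. intros j Hj.
            rewrite ltb_t by auto. rewrite combo_e. reflexivity.
          - intros j _. rewrite ltb_f by lia. rewrite combo_e. unfold zero_seq. ring. }
        assert (E2 : forall i, (i < n2)%nat -> c (n1 + i)%nat = RtoC 0).
        { apply (Hbi (fun j => c (n1 + j)%nat)). intros z. specialize (Hc (2*z+1)%Z). rewrite csum_split in Hc.
          rewrite (csum_zero n1) in Hc.
          - rewrite Cplus_0_l in Hc. rewrite <- Hc. apply csum_ext_lt. intros j Hj.
            rewrite ltb_f by lia. replace (n1 + j - n1)%nat with j by lia. rewrite combo_o. reflexivity.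
          - intros j Hj. rewrite ltb_t by auto. rewrite combo_o. unfold zero_seq. ring. }
        intros i Hi. destruct (Nat.lt_ge_cases i n1) as [H1|H1]. auto.
        replace i with (n1 + (i - n1))%nat by lia. apply E2. lia.
Qed.
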